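(* Under the hypotheses of Theorem 5 (conditions (C1), (C2a),(C3a) with $R_i(q)=Y_i(q)$, (C2b),(C3b), (C4), (C5), (C7), and $n_{[m]q}\ge2$ for all $m,q$), for every $f\in\{1,\dots,F\}$ the $(f,f)$ diagonal entries satisfy $$\{\tilde V(Y)\}_{ff}\ge\{\tilde V(\eta)\}_{ff}\quad\text{and}\quad\{V(Y)\}_{ff}\ge\{V(\eta)\}_{ff},$$ i.e. each component of $\hat\tau_{\mathrm{cond}}$ has asymptotic variance no larger than the corresponding component of $\hat\tau_{\mathrm{unadj}}$, and the probability limit of each diagonal entry of $\hat V_n(\hat\eta)$ is no larger than that of $\hat V_n(Y)$. In particular, when $K=1$ ($Q=2$, $F=1$), $\tilde V(Y)\ge\tilde V(\eta)$ and $V(Y)\ge V(\eta)$. This holds whether or not the propensity scores are equal across strata.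
   Context: Setup. A finite population of $n$ units is partitioned into $M$ strata; stratum $m$ contains $n_{[m]}$ units ($\sum_m n_{[m]}=n$), and $i\in[m]$ means unit $i$ belongs to stratum $m$. There are $Q$ treatments. In a stratified randomized experiment, for fixed integers $n_{[m]q}\ge1$ with $\sum_{q=1}^Q n_{[m]q}=n_{[m]}$, the assignment $Z=(Z_1,\dots,Z_n)$ is drawn uniformly among all assignments in which exactly $n_{[m]q}$ units of stratum $m$ receive treatment $q$, independently across strata. Write $\pi_{[m]}=n_{[m]}/n$ and $e_{[m]q}=n_{[m]q}/n_{[m]}$. All potential outcomes and covariates are fixed; the only randomness is $Z$. For unit-level column vectors $R_i(q)$ define $\bar R_{[m]}(q)=n_{[m]}^{-1}\sum_{i\in[m]}R_i(q)$, $\hat{\bar R}_{[m]}(q)=n_{[m]q}^{-1}\sum_{i\in[m]}I(Z_i=q)R_i(q)$, $\bar R(q)=\sum_m\pi_{[m]}\bar R_{[m]}(q)$ and $\hat{\bar R}(q)=\sum_m\pi_{[m]}\hat{\bar R}_{[m]}(q)$. For unit-level vectors $H_i,G_i$, $S_{[m]HG}=(n_{[m]}-1)^{-1}\sum_{i\in[m]}(H_i-\bar H_{[m]})(G_i-\bar G_{[m]})^T$ and $S^2_{[m]H}=S_{[m]HH}$. Arm-specific sample covariances: $s_{[m]XX}(q)=(n_{[m]q}-1)^{-1}\sum_{i\in[m]}I(Z_i=q)(X_i-\hat{\bar X}_{[m]}(q))(X_i-\hat{\bar X}_{[m]}(q))^T$, $s_{[m]XY}(q)=(n_{[m]q}-1)^{-1}\sum_{i\in[m]}I(Z_i=q)(X_i-\hat{\bar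 X}_{[m]}(q))(Y_i(q)-\hat{\bar Y}_{[m]}(q))$. All quantities depend on $n$; limits are as $n\to\infty$. Factorial setup. $Q=2^K$ treatment combinations ($K$ fixed) and $F=Q-1$ factorial effects. For $f=1,\dots,F$, $g_f=(g_{f,1},\dots,g_{f,Q})^T\in\{-1,+1\}^Q$ is the generating vector of the $f$th factorial effect: for a main effect of factor $k$, $g_{k,q}$ is the level ($\pm1$) of factor $k$ in combination $q$; for an interaction, $g_f$ is the entrywise product of the main-effect generating vectors of the factors involved. In particular $\sum_q g_{f,q}=0$. Let $d_q=(g_{1,q},\dots,g_{F,q})^T$, so $\sum_q d_q=0$. Each unit has potential outcomes $Y_i(q)\in\mathbb R$ (observed outcome $Y_i(Z_i)$) and a covariate vector $X_i\in\mathbb R^p$ ($p$ fixed), with stratum mean $\bar X_{[m]}$ and $\bar X=\sum_m\pi_{[m]}\bar X_{[m]}$. $\tau=2^{-(K-1)}\sum_q d_q\bar Y(q)$ and $\hat\tau_{\mathrm{unadj}}=2^{-(K-1)}\sum_q d_q\hat{\bar Y}(q)$. Conditional adjustment. $\gamma=\lim_{n}\big(\sum_m\pi_{[m]}\sum_q e_{[m]q}^{-1}S_{[m]XX}\big)^{-1}\big(\sum_m\pi_{[m]}\sum_q e_{[m]q}^{-1}S_{[m]XY(q)}\big)$, $\hat\gamma=\big(\sum_m\pi_{[m]}\sum_q e_{[m]q}^{-1}s_{[m]XX}(q)\big)^{-1}\big(\sum_m\pi_{[m]}\sum_q e_{[m]q}^{-1}s_{[m]XY}(q)\big)$, and $\hat\tau_{\mathrm{cond}}=2^{-(K-1)}\sum_q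 d_q\big[\hat{\bar Y}(q)-\{\hat{\bar X}(q)-\bar X\}^T\hat\gamma\big]$. Decomposition errors $\eta_i(q)=Y_i(q)-\bar Y_{[m]}(q)-(X_i-\bar X_{[m]})^T\gamma$ and residuals $\hat\eta_i(q)=Y_i(q)-\hat{\bar Y}_{[m]}(q)-\{X_i-\hat{\bar X}_{[m]}(q)\}^T\hat\gamma$ for $i\in[m]$. Variance notation. For unit-level scalars $W_i(q)$: $V_n(W)=2^{-2(K-1)}\sum_m\pi_{[m]}\sum_q e_{[m]q}^{-1}S^2_{[m]W(q)}d_qd_q^T$, $\tilde V_n(W)=V_n(W)-\sum_m\pi_{[m]}S^2_{[m]\tau^W}$ with $\tau^W_i=2^{-(K-1)}\sum_q d_qW_i(q)$; $V(W),\tilde V(W)$ denote limits as $n\to\infty$. For quantities $\hat W_i(q)$ computable for units with $Z_i=q$, $\hat V_n(\hat W)=2^{-2(K-1)}\sum_m\pi_{[m]}\sum_q e_{[m]q}^{-1}s^2_{[m]\hat W(q)}d_qd_q^T$, with $s^2_{[m]\hat W(q)}$ the sample variance of $\hat W_i(q)$ over units $i\in[m]$ with $Z_i=q$ (denominator $n_{[m]q}-1$); $\hat V_n(Y)$ uses $\hat W_i(q)=Y_i(q)$. Conditions. (C1): there exist constants $C_1\in(0,1/2)$ and $e^\infty_{[m]q}$, independent of $n$, with $C_1<e^\infty_{[m]q}<1-C_1$ and $\max_m\max_q|e_{[m]q}-e^\infty_{[m]q}|\to0$. (C2a): for a constant $C_2>0$ independent of $n$, $\max_m\max_q n_{[m]}^{-1}\sum_{i\in[m]}|Y_i(q)-\bar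 Y_{[m]}(q)|^2\le C_2$. (C2b): $\max_m n_{[m]}^{-1}\sum_{i\in[m]}\|X_i-\bar X_{[m]}\|_\infty^2\le C_2$. (C3a): $n^{-1}\max_m\max_{i\in[m]}\max_q|Y_i(q)-\bar Y_{[m]}(q)|^2\to0$. (C3b): $n^{-1}\max_m\max_{i\in[m]}\|X_i-\bar X_{[m]}\|_\infty^2\to0$. (C4): $\sum_m\pi_{[m]}S^2_{[m]Y(q)}/e_{[m]q}$ and $\sum_m\pi_{[m]}S_{[m]Y(q)Y(q')}$ converge to finite limits. (C5): for each $q$, $\sum_m\frac{\pi_{[m]}}{e_{[m]q}}S_{[m]XX}$, $\sum_m\pi_{[m]}S_{[m]XX}$, $\sum_m\frac{\pi_{[m]}}{e_{[m]q}}S_{[m]XY(q)}$, $\sum_m\pi_{[m]}S_{[m]XY(q)}$ converge to finite limits, and the limits of the first two matrices and of their difference are positive definite. (C7): $\sum_m\pi_{[m]}S^2_{[m]\eta(q)}/e_{[m]q}$ and $\sum_m\pi_{[m]}S_{[m]\eta(q)\eta(q')}$ converge to finite limits. *)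

(* Defs.v *)
From HB Require Import structures.
From mathcomp Require Import all_boot all_order all_algebra.
From mathcomp Require Import all_classical all_reals all_analysis.
Set Implicit Arguments. Unset Strict Implicit. Unset Printing Implicit Defensive.
Import Order.TTheory GRing.Theory Num.Theory.
Import numFieldNormedType.Exports.
Local Open Scope classical_set_scope.
Local Open Scope ring_scope.

(* Treatment combinations of a 2^K factorial design: a level (+1 = true,
   -1 = false) for each of the K factors. *)
Definition treat (K : nat) := {ffun 'I_K -> bool}.

(* Factorial effects are indexed by nonempty sets f of factors: {k} is the
   main effect of factor k, larger sets are interactions.  g_{f,q}: *)
Definition gen {R : realType} {K : nat} (f : {set 'I_K}) (q : treat K) : R :=
  \prod_(k in f) (if q k then 1 else -1).

(* A finite population partitioned into strata; unit i of stratum m is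
   (m, i : 'I_(nst m)).  nmq m q = n_{[m]q}, the number of units of stratum m
   assigned to treatment q. *)
Record population (R : realType) (K p : nat) : Type := Pop {
  M : nat;
  nst : 'I_M -> nat;
  Yo : forall m : 'I_M, 'I_(nst m) -> treat K -> R;
  Xc : forall m : 'I_M, 'I_(nst m) -> 'cV[R]_p;
  nmq : 'I_M -> treat K -> nat }.
Arguments M {R K p} _.
Arguments nst {R K p} _ _.
Arguments Yo {R K p} _ _ _ _.
Arguments Xc {R K p} _ _ _.
Arguments nmq {R K p} _ _ _.

Section Defs.
Variables (R : realType) (K p : nat).

(* finite maximum (of nonnegative quantities) *)
Definition bmax (I : finType) (F : I -> R) : R := \big[Num.max/0]_(i : I) F i.

Definition avg N (w : 'I_N -> R) : R := (N%:R)^-1 * \sum_(i < N) w i.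
Definition avgv a N (x : 'I_N -> 'cV[R]_a) : 'cV[R]_a :=
  (N%:R)^-1 *: \sum_(i < N) x i.
Definition scov N (h g : 'I_N -> R) : R :=
  ((N%:R - 1)^-1) * \sum_(i < N) (h i - avg h) * (g i - avg g).
Definition Smat a N (x : 'I_N -> 'cV[R]_a) : 'M[R]_a :=
  ((N%:R - 1)^-1) *: \sum_(i < N) ((x i - avgv x) *m (x i - avgv x)^T).
Definition Sxy a N (x : 'I_N -> 'cV[R]_a) (y : 'I_N -> R) : 'cV[R]_a :=
  ((N%:R - 1)^-1) *: \sum_(i < N) ((y i - avg y) *: (x i - avgv x)).

Definition ninf a (v : 'cV[R]_a) : R := bmax (fun k : 'I_a => `|v k 0|).

Variable P : population R K p.

Definition ntot : nat := \sum_(m < M P) nst P m.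
Definition pis (m : 'I_(M P)) : R := (nst P m)%:R / (ntot%:R).
Definition es (m : 'I_(M P)) (q : treat K) : R := (nmq P m q)%:R / (nst P m)%:R.

Definition unitfun := forall m : 'I_(M P), 'I_(nst P m) -> treat K -> R.

Definition c2 : R := ((2 ^ (K - 1))%N%:R)^-1.

Definition Vn (W : unitfun) (f f' : {set 'I_K}) : R :=
  c2 ^+ 2 * \sum_(m < M P) pis m *
    \sum_(q : treat K) (es m q)^-1 *
       scov (fun i => W m i q) (fun i => W m i q) * gen f q * gen f' q.

Definition tauW (W : unitfun) (m : 'I_(M P)) (i : 'I_(nst P m)) (f : {set 'I_K}) : R :=
  c2 * \sum_(q : treat K) gen f q * W m i q.

Definition Vtn (W : unitfun) (f f' : {set 'I_K}) : R :=
  Vn W f f' - \sum_(m < M P) pis m * scov (fun i => @tauW W m i f) (fun i => @tauW W m i f').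

Definition Yf : unitfun := fun m i q => Yo P m i q.

Definition etaW (gamma : 'cV[R]_p) : unitfun := fun m i q =>
  Yo P m i q - avg (fun j => Yo P m j q) - ((Xc P m i - avgv (Xc P m))^T *m gamma) 0 0.

Definition Bmat : 'M[R]_p :=
  \sum_(m < M P) pis m *: \sum_(q : treat K) (es m q)^-1 *: Smat (Xc P m).
Definition Avec : 'cV[R]_p :=
  \sum_(m < M P) pis m *: \sum_(q : treat K) (es m q)^-1 *: Sxy (Xc P m) (fun i => Yo P m i q).
Definition gamma_n : 'cV[R]_p := invmx Bmat *m Avec.

Definition SXXe (q : treat K) : 'M[R]_p :=
  \sum_(m < M P) (pis m / es m q) *: Smat (Xc P m).
Definition SXX : 'M[R]_p := \sum_(m < M P) pis m *: Smat (Xc P m).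
Definition SXYe (q : treat K) : 'cV[R]_p :=
  \sum_(m < M P) (pis m / es m q) *: Sxy (Xc P m) (fun i => Yo P m i q).
Definition SXY (q : treat K) : 'cV[R]_p :=
  \sum_(m < M P) pis m *: Sxy (Xc P m) (fun i => Yo P m i q).

Definition SWe (W : unitfun) (q : treat K) : R :=
  \sum_(m < M P) pis m * scov (fun i => W m i q) (fun i => W m i q) / es m q.
Definition SWW (W : unitfun) (q q' : treat K) : R :=
  \sum_(m < M P) pis m * scov (fun i => W m i q) (fun i => W m i q').

End Defs.
Arguments Yf {R K p} P _ _ _.
Arguments etaW {R K p} P gamma _ _ _.

Definition mx_cvg (R : realType) a b (A : nat -> 'M[R]_(a, b)) (L : 'M[R]_(a, b)) :=
  forall i j, (fun v => A v i j) @ \oo --> L i j.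

Definition posdef (R : realType) a (A : 'M[R]_a) :=
  forall v : 'cV[R]_a, v != 0 -> 0 < (v^T *m A *m v) 0 0.

(* Main.v *)
Require Import Defs.
From HB Require Import structures.
From mathcomp Require Import all_boot all_order all_algebra.
From mathcomp Require Import all_classical all_reals all_analysis.
From mathcomp Require Import ring lra.
From mathcomp Require Import perm.
Import Order.TTheory GRing.Theory Num.Theory.
Import numFieldNormedType.Exports.
Local Open Scope classical_set_scope.
Local Open Scope ring_scope.
Set Implicit Arguments. Unset Strict Implicit. Unset Printing Implicit Defensive.

Section Alg.
Variable R : realType.

Lemma sum_dev N (a : 'I_N -> R) : \sum_i (a i - avg a) = 0.
Proof.
rewrite sumrB sumr_const card_ord /avg; case: N a => [|N] a.
  by rewrite big_ord0 mulr0 mulr0n subr0.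
by rewrite -[_ *+ _]mulr_natl mulrA mulfV ?mul1r ?subrr // pnatr_eq0.
Qed.

Lemma sum_devv a N (x : 'I_N -> 'cV[R]_a) : \sum_i (x i - avgv x) = 0.
Proof.
rewrite sumrB sumr_const card_ord /avgv; case: N x => [|N] x.
  by rewrite big_ord0 scaler0 mulr0n subr0.
by rewrite -[_ *+ _]scaler_nat scalerA mulfV ?scale1r ?subrr // pnatr_eq0.
Qed.

Lemma scov_shift N (h : 'I_N -> R) c :
  scov (fun i => h i - c) (fun i => h i - c) = scov h h.
Proof.
rewrite /scov; case: N h => [|N] h; first by rewrite !big_ord0.
have -> : avg (fun i => h i - c) = avg h - c.
  rewrite /avg sumrB sumr_const card_ord mulrBr -[c *+ _]mulr_natl mulrA mulVf ?mul1r //.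
congr (_ * _); apply: eq_bigr => i _; ring.
Qed.

Lemma psiZ a (u w : 'cV[R]_a) c : (u^T *m (c *: w)) 0 0 = c * (u^T *m w) 0 0.
Proof. by rewrite -scalemxAr mxE. Qed.

Lemma psiS a I (r : seq I) (P : pred I) (u : 'cV[R]_a) (w : I -> 'cV[R]_a) :
  (u^T *m \sum_(i <- r | P i) w i) 0 0 = \sum_(i <- r | P i) (u^T *m w i) 0 0.
Proof. by rewrite mulmx_sumr summxE. Qed.

Lemma phiZ a (u : 'cV[R]_a) (M : 'M[R]_a) c :
  (u^T *m (c *: M) *m u) 0 0 = c * (u^T *m M *m u) 0 0.
Proof. by rewrite -scalemxAr -scalemxAl mxE. Qed.

Lemma phiS a I (r : seq I) (P : pred I) (u : 'cV[R]_a) (w : I -> 'M[R]_a) :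
  (u^T *m (\sum_(i <- r | P i) w i) *m u) 0 0 = \sum_(i <- r | P i) (u^T *m w i *m u) 0 0.
Proof. by rewrite mulmx_sumr mulmx_suml summxE. Qed.

Lemma tr11 a (u w : 'cV[R]_a) : (u^T *m w) 0 0 = (w^T *m u) 0 0.
Proof. have -> : w^T *m u = (u^T *m w)^T by rewrite trmx_mul trmxK. by rewrite [RHS]mxE. Qed.

Lemma phiD a (u d : 'cV[R]_a) :
  (u^T *m (d *m d^T) *m u) 0 0 = (d^T *m u) 0 0 ^+ 2.
Proof.
rewrite mulmxA -mulmxA [in LHS]mxE big_ord1 tr11 expr2 // .
Qed.

Lemma strat N (y : 'I_N -> R) a (x : 'I_N -> 'cV[R]_a) (g : 'cV[R]_a) :
  scov (fun i => y i - avg y - ((x i - avgv x)^T *m g) 0 0)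
       (fun i => y i - avg y - ((x i - avgv x)^T *m g) 0 0)
  = scov y y - 2 * (g^T *m Sxy x y) 0 0 + (g^T *m Smat x *m g) 0 0.
Proof.
set b := fun i => ((x i - avgv x)^T *m g) 0 0.
have sb : \sum_i b i = 0.
  rewrite /b -summxE -mulmx_suml.
  have -> : \sum_i (x i - avgv x)^T = (\sum_i (x i - avgv x))^T.
    by rewrite raddf_sum.
  by rewrite sum_devv trmx0 mul0mx mxE.
rewrite /Sxy /Smat psiZ phiZ psiS phiS /scov.
have -> : avg (fun i => y i - avg y - b i) = 0.
  by rewrite /avg sumrB sum_dev sb subrr mulr0.
have -> : \sum_i (g^T *m ((y i - avg y) *: (x i - avgv x))) 0 0
   = \sum_i (y i - avg y) * b i.
  by apply: eq_bigr => i _; rewrite psiZ tr11.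
have -> : \sum_i (g^T *m ((x i - avgv x) *m (x i - avgv x)^T) *m g) 0 0
   = \sum_i b i ^+ 2.
  by apply: eq_bigr => i _; rewrite phiD.
have E : \sum_i (y i - avg y - b i - 0) * (y i - avg y - b i - 0) =
  \sum_i (y i - avg y) * (y i - avg y) - 2 * \sum_i (y i - avg y) * b i
  + \sum_i b i ^+ 2.
  rewrite (eq_bigr (fun i => (y i - avg y) * (y i - avg y) +
     ((-2) * ((y i - avg y) * b i) + b i ^+ 2))); last by move=> i _; ring.
  rewrite big_split big_split /= -mulr_sumr; ring.
rewrite E; ring.
Qed.

Lemma gen_sq K (f : {set 'I_K}) (q : treat K) : gen f q * gen f q = 1 :> R.
Proof.
rewrite /gen -big_split /=; apply: big1 => k _; case: (q k); rewrite ?mulr1 //.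
by rewrite mulrNN mulr1.
Qed.

Lemma gen_sum K (f : {set 'I_K}) : f != finset.set0 -> \sum_(q : treat K) gen f q = 0 :> R.
Proof.
case/set0Pn => k0 k0f.
have E : forall q : treat K, gen f q =
   \prod_(k : 'I_K) (fun k b => if k \in f then (if b then 1 else -1) else 1 : R) k (q k).
  by move=> q; rewrite /gen big_mkcond.
under eq_bigr do rewrite E.
rewrite -(bigA_distr_bigA (fun k b => if k \in f then (if b then 1 else -1) else 1 : R)).
rewrite (bigD1 k0) //= k0f big_bool /= subrr mul0r //.
Qed.

Section Pop.
Variables (K p : nat) (P : population R K p) (g : 'cV[R]_p).

Lemma Vn_diff (f : {set 'I_K}) :
  Vn (Yf P) f f - Vn (etaW P g) f f =
  c2 R K ^+ 2 * (2 * (g^T *m Avec P) 0 0 - (g^T *m Bmat P *m g) 0 0).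
Proof.
rewrite /Vn -mulrBr; congr (_ * _).
rewrite /Avec /Bmat psiS phiS -sumrB mulr_sumr -sumrB; apply: eq_bigr => m _.
rewrite psiZ phiZ psiS phiS.
have -> : 2 * (pis m * \sum_q (g^T *m ((es m q)^-1 *: Sxy (Xc P m) (fun i => Yo P m i q))) 0 0)
   - pis m * \sum_q (g^T *m ((es m q)^-1 *: Smat (Xc P m)) *m g) 0 0 =
   pis m * \sum_q (es m q)^-1 * (2 * (g^T *m Sxy (Xc P m) (fun i => Yo P m i q)) 0 0
        - (g^T *m Smat (Xc P m) *m g) 0 0).
  rewrite mulrA (mulrC 2) -mulrA -mulrBr; congr (_ * _).
  rewrite mulr_sumr -sumrB; apply: eq_bigr => q _; rewrite psiZ phiZ; ring.
rewrite -mulrBr; congr (_ * _); rewrite -sumrB; apply: eq_bigr => q _.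
rewrite /etaW /Yf strat.
rewrite -!mulrA gen_sq !mulr1 /scov; ring.
Qed.

Lemma Vtn_diff (f : {set 'I_K}) : f != finset.set0 ->
  Vtn (Yf P) f f - Vtn (etaW P g) f f = Vn (Yf P) f f - Vn (etaW P g) f f.
Proof.
move=> fne; rewrite /Vtn.
suff E : forall a b c d : R, c = d -> a - c - (b - d) = a - b.
  apply: E.
2: by move=> a b c d ->; ring.
apply: eq_bigr => m _; congr (_ * _).
have E : forall i : 'I_(nst P m), tauW (etaW P g) i f = tauW (Yf P) i f -
   c2 R K * \sum_q gen f q * avg (fun j => Yo P m j q).
  move=> i; rewrite /tauW /etaW /Yf -mulrBr; congr (_ * _).
  have -> : \sum_q gen f q * (Yo P m i q - avg (fun j => Yo P m j q) -
       ((Xc P m i - avgv (Xc P m))^T *m g) 0 0) =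
     \sum_q (gen f q * Yo P m i q - gen f q * avg (fun j => Yo P m j q)) -
     (\sum_q gen f q) * ((Xc P m i - avgv (Xc P m))^T *m g) 0 0.
    rewrite mulr_suml -sumrB; apply: eq_bigr => q _; ring.
  by rewrite gen_sum // mul0r subr0 sumrB.
by rewrite (funext E) scov_shift.
Qed.
End Pop.

Lemma cvg_fsum (I : Type) (r : seq I) (Pr : pred I) (u : I -> nat -> R) (l : I -> R) :
  (forall i, Pr i -> u i @ \oo --> l i) ->
  (fun v => \sum_(i <- r | Pr i) u i v) @ \oo --> \sum_(i <- r | Pr i) l i.
Proof.
move=> H; elim: r => [|i r IH].
  have -> : (fun v => \sum_(i <- [::] | Pr i) u i v) = fun=> 0.
    by apply: funext => v; rewrite big_nil.
  rewrite big_nil; exact: cvg_cst.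
have -> : (fun v => \sum_(j <- i :: r | Pr j) u j v) =
   (fun v => if Pr i then u i v + \sum_(j <- r | Pr j) u j v
             else \sum_(j <- r | Pr j) u j v).
  by apply: funext => v; rewrite big_cons.
rewrite big_cons; case: ifP => Pi //.
exact: (cvgD (H _ Pi) IH).
Qed.

Lemma cvg_fprod (I : Type) (r : seq I) (Pr : pred I) (u : I -> nat -> R) (l : I -> R) :
  (forall i, Pr i -> u i @ \oo --> l i) ->
  (fun v => \prod_(i <- r | Pr i) u i v) @ \oo --> \prod_(i <- r | Pr i) l i.
Proof.
move=> H; elim: r => [|i r IH].
  have -> : (fun v => \prod_(i <- [::] | Pr i) u i v) = fun=> 1.
    by apply: funext => v; rewrite big_nil.
  rewrite big_nil; exact: cvg_cst.
have -> : (fun v => \prod_(j <- i :: r | Pr j) u j v) =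
   (fun v => if Pr i then u i v * \prod_(j <- r | Pr j) u j v
             else \prod_(j <- r | Pr j) u j v).
  by apply: funext => v; rewrite big_cons.
rewrite big_cons; case: ifP => Pi //.
exact: (cvgM (H _ Pi) IH).
Qed.

Lemma cvg_cstM (u : nat -> R) l c : u @ \oo --> l -> (fun v => c * u v) @ \oo --> c * l.
Proof. move=> H; exact: (cvgM (cvg_cst c) H). Qed.

Lemma cvg_same (u w : nat -> R) (a b : R) : u @ \oo --> a -> w @ \oo --> b ->
  (\forall v \near \oo, u v = w v) -> a = b.
Proof.
move=> Hu Hw E.
have H0 : (u - w) @ \oo --> a - b by apply: cvgB.
have H1 : (u - w) @ \oo --> (0 : R).
  apply: cvg_near_cst; apply: filterS E => v Ev; change (u v - w v = 0); by rewrite Ev subrr.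
apply/eqP; rewrite -subr_eq0; apply/eqP; exact: (cvg_unique _ H0 H1).

Qed.

Lemma cvg_eq (u : nat -> R) (a b : R) : u @ \oo --> a -> u @ \oo --> b -> a = b.
Proof. move=> Ha Hb; exact: (cvg_unique _ Ha Hb). Qed.

Lemma psiE a (u : 'cV[R]_a) (M : 'cV[R]_a) :
  (u^T *m M) 0 0 = \sum_k u^T 0 k * M k 0.
Proof. by rewrite mxE. Qed.

Lemma phiE a (u : 'cV[R]_a) (M : 'M[R]_a) :
  (u^T *m M *m u) 0 0 = \sum_j (\sum_k u^T 0 k * M k j) * u j 0.
Proof. by rewrite mxE; apply: eq_bigr => j _; rewrite mxE. Qed.
End Alg.

Theorem mainTheorem9 (R : realType) (K p : nat) (P : nat -> population R K p)
  (gamma : 'cV[R]_p) :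
  (* n -> infinity *)
  (forall N : nat, \forall v \near \oo, (N <= ntot (P v))%N) ->
  (* stratified design: n_{[m]q} >= 2 and sum_q n_{[m]q} = n_{[m]} *)
  (forall v (m : 'I_(M (P v))) q, (2 <= nmq (P v) m q)%N) ->
  (forall v (m : 'I_(M (P v))), (\sum_(q : treat K) nmq (P v) m q)%N = nst (P v) m) ->
  (* (C1) *)
  (exists (C1 : R) (einf : nat -> treat K -> R),
      0 < C1 < 1/2 /\
      (forall m q, C1 < einf m q < 1 - C1) /\
      (fun v => bmax (fun m : 'I_(M (P v)) =>
                 bmax (fun q : treat K => `|es m q - einf (nat_of_ord m) q|)))
        @ \oo --> 0) ->
  (* (C2a), (C2b) *)
  (exists C2 : R, 0 < C2 /\ forall v (m : 'I_(M (P v))),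
      (forall q, ((nst (P v) m)%:R)^-1 *
          \sum_(i < nst (P v) m) `|Yo (P v) m i q - avg (fun j => Yo (P v) m j q)| ^+ 2 <= C2) /\
      ((nst (P v) m)%:R)^-1 *
          \sum_(i < nst (P v) m) ninf (Xc (P v) m i - avgv (Xc (P v) m)) ^+ 2 <= C2) ->
  (* (C3a) *)
  (fun v => ((ntot (P v))%:R)^-1 *
     bmax (fun m : 'I_(M (P v)) => bmax (fun i : 'I_(nst (P v) m) => bmax (fun q : treat K =>
       `|Yo (P v) m i q - avg (fun j => Yo (P v) m j q)| ^+ 2)))) @ \oo --> 0 ->
  (* (C3b) *)
  (fun v => ((ntot (P v))%:R)^-1 *
     bmax (fun m : 'I_(M (P v)) => bmax (fun i : 'I_(nst (P v) m) =>
       ninf (Xc (P v) m i - avgv (Xc (P v) m)) ^+ 2))) @ \oo --> 0 ->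
  (* (C4) *)
  (forall q, exists l : R, (fun v => SWe (Yf (P v)) q) @ \oo --> l) ->
  (forall q q', exists l : R, (fun v => SWW (Yf (P v)) q q') @ \oo --> l) ->
  (* (C5) *)
  (forall q, exists (L1 L2 : 'M[R]_p) (L3 L4 : 'cV[R]_p),
      mx_cvg (fun v => SXXe (P v) q) L1 /\ mx_cvg (fun v => SXX (P v)) L2 /\
      mx_cvg (fun v => SXYe (P v) q) L3 /\ mx_cvg (fun v => SXY (P v) q) L4 /\
      posdef L1 /\ posdef L2 /\ posdef (L1 - L2)) ->
  (* gamma is the limit defining the conditional adjustment coefficient *)
  mx_cvg (fun v => gamma_n (P v)) gamma ->
  (* (C7) *)
  (forall q, exists l : R, (fun v => SWe (etaW (P v) gamma) q) @ \oo --> l) ->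
  (forall q q', exists l : R, (fun v => SWW (etaW (P v) gamma) q q') @ \oo --> l) ->
  (* conclusion: for every factorial effect f, with V(.) and tilde V(.) the limits *)
  forall f : {set 'I_K}, f != finset.set0 ->
  forall lVY lVeta lVtY lVteta : R,
    (fun v => Vn (Yf (P v)) f f) @ \oo --> lVY ->
    (fun v => Vn (etaW (P v) gamma) f f) @ \oo --> lVeta ->
    (fun v => Vtn (Yf (P v)) f f) @ \oo --> lVtY ->
    (fun v => Vtn (etaW (P v) gamma) f f) @ \oo --> lVteta ->
    lVteta <= lVtY /\ lVeta <= lVY.
Proof.
move=> Hn Hge2 Hsum C1 C2 C3a C3b C4a C4b C5 Hgam C7a C7b f fne
  lVY lVeta lVtY lVteta cY ceta ctY cteta.
have H5 : forall q : treat K, exists L : 'M[R]_p * 'cV[R]_p,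
    mx_cvg (fun v => SXXe (P v) q) L.1 /\ mx_cvg (fun v => SXYe (P v) q) L.2 /\
    posdef L.1.
  move=> q; have [L1 [L2 [L3 [L4 [h1 [_ [h3 [_ [h5 _]]]]]]]]] := C5 q.
  by exists (L1, L3).
have [F HF] := choice H5.
pose B := \sum_q (F q).1.
pose A := \sum_q (F q).2.
have BmatE : forall v, Bmat (P v) = \sum_q SXXe (P v) q.
  move=> v; rewrite /Bmat /SXXe.
  under eq_bigr do rewrite scaler_sumr.
  rewrite exchange_big; apply: eq_bigr => q _; apply: eq_bigr => m _.
  by rewrite scalerA.
have AvecE : forall v, Avec (P v) = \sum_q SXYe (P v) q.
  move=> v; rewrite /Avec /SXYe.
  under eq_bigr do rewrite scaler_sumr.
  rewrite exchange_big; apply: eq_bigr => q _; apply: eq_bigr => m _.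
  by rewrite scalerA.
have cB : forall i j, (fun v => Bmat (P v) i j) @ \oo --> B i j.
  move=> i j; rewrite /B summxE.
  have -> : (fun v => Bmat (P v) i j) = fun v => \sum_q SXXe (P v) q i j.
    by apply: funext => v; rewrite BmatE summxE.
  apply: (cvg_fsum (u := fun q v => SXXe (P v) q i j)) => q _.
  exact: (HF q).1.
have cA : forall i j, (fun v => Avec (P v) i j) @ \oo --> A i j.
  move=> i j; rewrite /A summxE.
  have -> : (fun v => Avec (P v) i j) = fun v => \sum_q SXYe (P v) q i j.
    by apply: funext => v; rewrite AvecE summxE.
  apply: (cvg_fsum (u := fun q v => SXYe (P v) q i j)) => q _.
  exact: (HF q).2.1.
have posB : posdef B.
  move=> w w0; rewrite phiS (bigD1 [ffun=> true]) //=.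
  apply: ltr_wpDr; last exact: (HF _).2.2 w w0.
  by apply: sumr_ge0 => q _; apply: ltW; exact: (HF q).2.2 w w0.
have detB : \det B != 0.
  apply/negP => /det0P [r r0 rB].
  have r0' : r^T != 0.
    apply: contra_neq r0 => h; apply: trmx_inj; by rewrite h trmx0.
  by have := posB _ r0'; rewrite trmxK rB mul0mx mxE ltxx.
have dE : forall Mx : 'M[R]_p, \det Mx = \sum_(s : 'S_p) (-1) ^+ s * \prod_i Mx i (s i).
  by [].
have cdet : (fun v => \det (Bmat (P v))) @ \oo --> \det B.
  rewrite dE.
  have -> : (fun v => \det (Bmat (P v))) =
     fun v => \sum_(s : 'S_p) (-1) ^+ s * \prod_i Bmat (P v) i (s i).
    by apply: funext => v; rewrite dE.
  apply: (cvg_fsum (u := fun (s : 'S_p) v => (-1) ^+ s * \prod_i Bmat (P v) i (s i))) => s _.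
  apply: cvg_cstM.
  apply: (cvg_fprod (u := fun i v => Bmat (P v) i (s i))) => i _.
  exact: cB.
have nearU : \forall v \near \oo, Bmat (P v) *m gamma_n (P v) = Avec (P v).
  apply: filterS (cvgr_neq0 _ cdet detB) => v dv.
  by rewrite /gamma_n mulKVmx // unitmxE unitfE.
have AB : A = B *m gamma.
  apply/matrixP => i j; rewrite (ord1 j).
  apply: (cvg_same (cA i 0)
     (_ : (fun v => (Bmat (P v) *m gamma_n (P v)) i 0) @ \oo --> (B *m gamma) i 0)).
    rewrite mxE.
    have -> : (fun v => (Bmat (P v) *m gamma_n (P v)) i 0) =
       fun v => \sum_k Bmat (P v) i k * gamma_n (P v) k 0.
      by apply: funext => v; rewrite mxE.
    apply: (cvg_fsum (u := fun k v => Bmat (P v) i k * gamma_n (P v) k 0)) => k _.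
    exact: (cvgM (cB i k) (Hgam k 0)).
  by apply: filterS nearU => v ->.
have cT : (fun v => 2 * (gamma^T *m Avec (P v)) 0 0 - (gamma^T *m Bmat (P v) *m gamma) 0 0)
    @ \oo --> 2 * (gamma^T *m A) 0 0 - (gamma^T *m B *m gamma) 0 0.
  apply: cvgB.
    apply: cvg_cstM; rewrite psiE.
    have -> : (fun v => (gamma^T *m Avec (P v)) 0 0) =
       fun v => \sum_k gamma^T 0 k * Avec (P v) k 0.
      by apply: funext => v; rewrite psiE.
    apply: (cvg_fsum (u := fun k v => gamma^T 0 k * Avec (P v) k 0)) => k _.
    exact: cvg_cstM.
  rewrite phiE.
  have -> : (fun v => (gamma^T *m Bmat (P v) *m gamma) 0 0) =
     fun v => \sum_j (\sum_k gamma^T 0 k * Bmat (P v) k j) * gamma j 0.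
    by apply: funext => v; rewrite phiE.
  apply: (cvg_fsum (u := fun j v => (\sum_k gamma^T 0 k * Bmat (P v) k j) * gamma j 0)) => j _.
  apply: (cvgM _ (cvg_cst _)).
  apply: (cvg_fsum (u := fun k v => gamma^T 0 k * Bmat (P v) k j)) => k _.
  exact: cvg_cstM.
have Tlim : 2 * (gamma^T *m A) 0 0 - (gamma^T *m B *m gamma) 0 0 =
    (gamma^T *m B *m gamma) 0 0.
  by rewrite AB mulmxA; ring.
have phiB0 : 0 <= (gamma^T *m B *m gamma) 0 0.
  have [->|g0] := eqVneq gamma 0; first by rewrite mulmx0 mxE.
  exact: ltW (posB _ g0).
have cD : (fun v => Vn (Yf (P v)) f f - Vn (etaW (P v) gamma) f f) @ \oo -->
    c2 R K ^+ 2 * (gamma^T *m B *m gamma) 0 0.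
  have -> : (fun v => Vn (Yf (P v)) f f - Vn (etaW (P v) gamma) f f) =
     fun v => c2 R K ^+ 2 * (2 * (gamma^T *m Avec (P v)) 0 0 -
                             (gamma^T *m Bmat (P v) *m gamma) 0 0).
    by apply: funext => v; rewrite Vn_diff.
  rewrite -Tlim; exact: cvg_cstM.
have E1 : lVY - lVeta = c2 R K ^+ 2 * (gamma^T *m B *m gamma) 0 0.
  apply: (cvg_eq _ cD); exact: (cvgB cY ceta).
have E2 : lVtY - lVteta = c2 R K ^+ 2 * (gamma^T *m B *m gamma) 0 0.
  apply: (cvg_eq _ cD).
  have -> : (fun v => Vn (Yf (P v)) f f - Vn (etaW (P v) gamma) f f) =
     fun v => Vtn (Yf (P v)) f f - Vtn (etaW (P v) gamma) f f.
    by apply: funext => v; rewrite Vtn_diff.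
  exact: (cvgB ctY cteta).
have pos : 0 <= c2 R K ^+ 2 * (gamma^T *m B *m gamma) 0 0.
  by apply: mulr_ge0 => //; exact: sqr_ge0.
by split; rewrite -subr_ge0 ?E1 ?E2.
Qed.
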